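(* There exist an alphabet $A$ and words $\mathbf a,\mathbf c\in A^\ast$ such that $\mathbf a:\mathbf a^r::_m\mathbf c:\mathbf c^r$ does not hold in $(A^\ast,\cdot,A^\ast)$.
   Context: The reverse of a word $\mathbf a=a_1\ldots a_n$ is $\mathbf a^r:=a_n\ldots a_1$. $(A^\ast,\cdot,A^\ast)$ is the algebra whose universe is the set $A^\ast$ of all finite words over $A$ (including the empty word), with concatenation and every word as a constant. A justification is a pair of terms $s\to t$ with the variables of $t$ among those of $s$; monolinear justifications are those where $s,t$ contain only one fixed variable $x$, occurring at most once in $s$ and at most once in $t$. $\uparrow^m(\mathbf a\to\mathbf b)$ is the set of monolinear justifications $s\to t$ with $\mathbf a=s(\mathbf o)$, $\mathbf b=t(\mathbf o)$ for some value $\mathbf o$; $\uparrow^m(\mathbf a\to\mathbf b:\!\cdot\,\mathbf c\to\mathbf d):=\uparrow^m(\mathbf a\to\mathbf b)\cap\uparrow^m(\mathbf c\to\mathbf d)$. A monolinear justification is trivial if it lies in all sets $\uparrow^m(\mathbf a'\to\mathbf b':\!\cdot\,\mathbf c'\to\mathbf d')$. $\mathbf a\to\mathbf b:\!\cdot_m\,\mathbf c\to\mathbf d$ holds iff either (i) all justifications in $\uparrow^m(\mathbf a\to\mathbf b)\cup\uparrow^m(\mathbf c\to\mathbf d)$ are trivial, or (ii) $J_{\mathbf d}:=\uparrow^m(\mathbf a\to\mathbf b:\!\cdot\,\mathbf c\to\mathbf d)$ contains a non-trivial justification and for every $\mathbf d'$, $J_{\mathbf d}\subseteq J_{\mathbf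 d'}$ implies $J_{\mathbf d'}$ contains a non-trivial justification and $J_{\mathbf d'}\subseteq J_{\mathbf d}$ (ignoring trivial justifications). $\mathbf a:\mathbf b::_m\mathbf c:\mathbf d$ iff $\mathbf a\to\mathbf b:\!\cdot_m\,\mathbf c\to\mathbf d$, $\mathbf b\to\mathbf a:\!\cdot_m\,\mathbf d\to\mathbf c$, $\mathbf c\to\mathbf d:\!\cdot_m\,\mathbf a\to\mathbf b$, $\mathbf d\to\mathbf c:\!\cdot_m\,\mathbf b\to\mathbf a$ all hold. *)

(* Defs.v *)
From mathcomp Require Import all_boot.
Set Implicit Arguments.
Unset Strict Implicit.
Unset Printing Implicit Defensive.

Section Analogy.
Variable A : finType.

(* Terms of the algebra (A-star, concatenation, all words as constants) in the single fixed variable x: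
   the variable, a constant (any word, including the empty one),
   or a concatenation of two terms. *)
Inductive term : Type :=
| tvar : term
| tcst : seq A -> term
| tcat : term -> term -> term.

Fixpoint teval (t : term) (o : seq A) : seq A :=
  match t with
  | tvar => o
  | tcst w => w
  | tcat t1 t2 => teval t1 o ++ teval t2 o
  end.

Fixpoint occ (t : term) : nat :=
  match t with
  | tvar => 1
  | tcst _ => 0
  | tcat t1 t2 => occ t1 + occ t2
  end.

Definition justif := (term * term)%type.

Definition monolinear (j : justif) : Prop :=
  occ j.1 <= 1 /\ occ j.2 <= 1 /\ (0 < occ j.2 -> 0 < occ j.1).

Definition upm (a b : seq A) (j : justif) : Prop :=
  monolinear j /\ exists o, teval j.1 o = a /\ teval j.2 o = b.

Definition upm2 (a b c d : seq A) (j : justif) : Prop :=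
  upm a b j /\ upm c d j.

Definition trivial_just (j : justif) : Prop :=
  monolinear j /\ forall a' b' c' d', upm2 a' b' c' d' j.

Definition nt_subset (P Q : justif -> Prop) : Prop :=
  forall j, P j -> ~ trivial_just j -> Q j.

Definition has_nontrivial (P : justif -> Prop) : Prop :=
  exists j, P j /\ ~ trivial_just j.

Definition arrow_m (a b c d : seq A) : Prop :=
  (forall j, (upm a b j \/ upm c d j) -> trivial_just j)
  \/ (has_nontrivial (upm2 a b c d) /\
      forall d' : seq A,
        nt_subset (upm2 a b c d) (upm2 a b c d') ->
        has_nontrivial (upm2 a b c d') /\
        nt_subset (upm2 a b c d') (upm2 a b c d)).

Definition analogy_m (a b c d : seq A) : Prop :=
  [/\ arrow_m a b c d, arrow_m b a d c, arrow_m c d a b & arrow_m d c b a].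

End Analogy.

(* Main.v *)
Require Import Defs.
From mathcomp Require Import all_boot.

Lemma teval_nil (A : finType) (s : term A) o o' :
  teval s o = [::] -> occ s <= 1 ->
  teval s o' = if occ s == 0 then [::] else o'.
Proof.
elim: s => [|w|s1 IH1 s2 IH2] /=.
- by [].
- by [].
- move=> H12 Ho.
  have H1 : teval s1 o = [::] by move: H12; case: (teval s1 o).
  have H2 : teval s2 o = [::] by move: H12; rewrite H1.
  have Ho1 : occ s1 <= 1 by apply: leq_trans Ho; apply: leq_addr.
  have Ho2 : occ s2 <= 1 by apply: leq_trans Ho; apply: leq_addl.
  rewrite (IH1 H1 Ho1) (IH2 H2 Ho2).
  move: Ho; case: (occ s1) => [|[|n]] //=; case: (occ s2) => [|[|m]] //=;
  by rewrite ?cats0 // addnS.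
Qed.

Theorem mainTheorem14 :
  exists (A : finType) (a c : seq A),
    ~ analogy_m a (rev a) c (rev c).
Proof.
exists (bool : finType), [::], [:: true; false].
case => H _ _ _; case: H => [H | [[j [[[[Hs1 [Ht1 _]] [o [Hs Ht]]] [_ [o' [Hs' Ht']]]] _]] _]].
- have := H (tvar (bool : finType), tcst [::]) (or_introl (conj _ _)).
  case.
  + by split.
  + by exists [::].
  move=> _ /(_ [::] [:: true] [::] [::]) [[_ [o [_ /= E]]] _] //.
- case: j Hs1 Ht1 Hs Ht Hs' Ht' => s t /= Hs1 Ht1 Hs Ht Hs' Ht'.
  rewrite (@teval_nil _ s o o' Hs Hs1) in Hs'.
  move: Hs'; case: (occ s == 0) => // E; subst o'.
  rewrite (@teval_nil _ t o [:: true; false] Ht Ht1) in Ht'.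
  by move: Ht'; case: (occ t == 0).
Qed.
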